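(* Let $\{\mathcal N,\gamma,\boldsymbol\ell,\ell^{(2)}\}$ be metric hypersurface data and $p\in\mathcal N$ a point with $\mathrm{Rad}(\gamma|_p)\neq\{0\}$. Then $$\mathrm{sign}(\boldsymbol{\mathcal A}|_p)=\{-1,1\}\sqcup\big(\mathrm{sign}(\gamma|_p)\setminus\{0\}\big),$$ where $\sqcup$ is disjoint union (of multisets). In particular, $\boldsymbol{\mathcal A}|_p$ has Lorentzian signature if and only if $\gamma|_p$ is positive semi-definite.
   Context: Metric hypersurface data: $\mathcal N$ a smooth manifold, $\gamma$ a symmetric $2$-covariant tensor field, $\boldsymbol\ell$ a one-form and $\ell^{(2)}$ a function such that for every $p$ the symmetric bilinear form $\boldsymbol{\mathcal A}|_p((W,a),(Z,b))=\gamma|_p(W,Z)+a\boldsymbol\ell|_p(Z)+b\boldsymbol\ell|_p(W)+ab\,\ell^{(2)}(p)$ on $T_p\mathcal N\times\mathbb R$ is non-degenerate. $\mathrm{Rad}(\gamma|_p)=\{X\in T_p\mathcal N:\gamma|_p(X,\cdot)=0\}$; for such data it is at most one-dimensional. The signature $\mathrm{sign}(q)$ of a quadratic form $q$ is the unordered multiset of diagonal entries ($0$, $-1$, $+1$) of its canonical form; $\mathrm{sign}(\gamma|_p)\setminus\{0\}$ means removing the single $0$ entry. *)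

(* Defs.v *)
From HB Require Import structures.
From mathcomp Require Import all_boot all_order all_algebra.
From mathcomp Require Import reals.
Set Implicit Arguments. Unset Strict Implicit. Unset Printing Implicit Defensive.
Import Order.TTheory GRing.Theory Num.Theory.
Local Open Scope ring_scope.

(* A quadratic (symmetric bilinear) form on R^m is represented by its Gram
   matrix Q; vectors are row vectors, q(x,y) = x *m Q *m y^T. *)

Definition is_sign (R : realType) (m : nat) (Q : 'M[R]_m) (s : seq R) : Prop :=
  exists P : 'M[R]_m, P \in unitmx /\
  exists d : 'rV[R]_m,
    (forall i, d 0 i \in [:: -1; 0; 1]) /\
    P^T *m Q *m P = diag_mx d /\
    perm_eq [seq d 0 i | i <- enum 'I_m] s.

(* The ambient form A|_p on T_pN x R ≅ R^(n+1). *)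
Definition ambientA (R : realType) (n : nat) (gamma : 'M[R]_n) (ell : 'rV[R]_n)
  (ell2 : R) : 'M[R]_(n + 1) :=
  block_mx gamma ell^T ell ell2%:M.

Definition nondeg_form (R : realType) (m : nat) (Q : 'M[R]_m) : Prop :=
  forall v : 'rV[R]_m, v *m Q = 0 -> v = 0.

Definition radical_nontrivial (R : realType) (n : nat) (gamma : 'M[R]_n) : Prop :=
  exists X : 'rV[R]_n, X != 0 /\ X *m gamma = 0.

Definition psd_form (R : realType) (n : nat) (gamma : 'M[R]_n) : Prop :=
  forall v : 'rV[R]_n, 0 <= (v *m gamma *m v^T) 0 0.

(* Main.v *)
Require Import Defs.
From HB Require Import structures.
From mathcomp Require Import all_boot all_order all_algebra perm.
From mathcomp Require Import reals.
From mathcomp Require Import ring lra zify.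
Set Implicit Arguments. Unset Strict Implicit. Unset Printing Implicit Defensive.
Import Order.TTheory GRing.Theory Num.Theory.
Local Open Scope ring_scope.

Section S.
Variable R : realType.

Lemma congr_entry k m (C : 'M[R]_(k, m)) (Q : 'M[R]_m) i j :
  (C *m Q *m C^T) i j = (row i C *m Q *m (row j C)^T) 0 0.
Proof.
rewrite !mxE; apply: eq_bigr => l _; rewrite !mxE; congr (_ * _).
by apply: eq_bigr => r _; rewrite !mxE.
Qed.

Lemma bf_delta m (Q : 'M[R]_m) i j : ((delta_mx 0 i : 'rV_m) *m Q *m (delta_mx 0 j : 'rV_m)^T) 0 0 = Q i j.
Proof. by rewrite -rowE trmx_delta -colE !mxE. Qed.

Lemma addE m k (A B : 'M[R]_(m, k)) i j : (A + B) i j = A i j + B i j.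
Proof. by rewrite mxE. Qed.

Lemma pivot_diag m (Q : 'M[R]_m.+1) k : Q k k != 0 ->
  exists C, C \in unitmx /\ (C *m Q *m C^T) 0 0 != 0.
Proof.
move=> hk; exists (tperm_mx 0 k); split; first exact: unitmx_perm.
by rewrite congr_entry tperm_mxEsub row_rowsub row1 tpermL bf_delta.
Qed.

Lemma pivot m (Q : 'M[R]_m.+1) : Q^T = Q -> Q != 0 ->
  exists C, C \in unitmx /\ (C *m Q *m C^T) 0 0 != 0.
Proof.
move=> hs hQ.
have [i [j hij]] : exists i j, Q i j != 0.
  case: (boolP [exists i, exists j, Q i j != 0]).
    by case/existsP => i /existsP [j h]; exists i, j.
  move/existsPn => h; case/eqP: hQ; apply/matrixP => i j; rewrite mxE.
  by move/existsPn: (h i) => /(_ j); rewrite negbK => /eqP.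
have [hii|hii] := eqVneq (Q i i) 0; last exact: pivot_diag hii.
have [hjj|hjj] := eqVneq (Q j j) 0; last exact: pivot_diag hjj.
have nij : i != j by apply: contraNneq hij => <-; rewrite hii.
set D := delta_mx i j : 'M[R]_m.+1.
exists (tperm_mx 0 i *m (1 + D)); split.
  rewrite unitmx_mul unitmx_perm /=.
  have [] // := @mulmx1_unit _ _ (1 + D) (1 - D).
  rewrite mulmxDl !mulmxBr !mul1mx /D mul_delta_mx_cond eq_sym (negbTE nij) mulr0n.
  by rewrite mulmx1 subr0 subrK.
rewrite congr_entry row_mul tperm_mxEsub row_rowsub row1 tpermL.
rewrite mulmxDr mulmx1 /D mul_delta_mx.
rewrite linearD /= !mulmxDl !mulmxDr !addE !bf_delta hii hjj.
have -> : Q j i = Q i j by rewrite -[in LHS]hs mxE.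
by rewrite add0r addr0 -mulr2n mulrn_eq0 negb_or hij.
Qed.

Lemma step m (Q : 'M[R]_(1 + m)) : Q^T = Q -> Q 0 0 != 0 ->
  exists L, L \in unitmx /\ exists Q' : 'M_m, Q'^T = Q' /\
    L *m Q *m L^T = block_mx (Q 0 0)%:M 0 0 Q'.
Proof.
move=> hs; set a := Q 0 0 => ha.
have Qe : Q = block_mx a%:M (dlsubmx Q)^T (dlsubmx Q) (drsubmx Q).
  rewrite -{1}[Q]submxK; congr block_mx.
    rewrite [LHS]mx11_scalar /a !mxE /=; congr (_%:M); congr (Q _ _); exact: val_inj.
  by rewrite trmx_dlsub hs.
have hD : (drsubmx Q)^T = drsubmx Q by rewrite -[in RHS]hs trmx_drsub.
set c := dlsubmx Q in Qe; set D := drsubmx Q in Qe hD.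
exists (block_mx 1 0 (- (a^-1 *: c)) 1); split.
  by rewrite unitmxE det_lblock !det1 mulr1 unitr1.
exists (D - a^-1 *: (c *m c^T)); split.
  by rewrite linearB /= linearZ /= trmx_mul trmxK hD.
rewrite Qe tr_block_mx !mulmx_block !trmx0 !trmx1 !mul1mx !mulmx1 !mul0mx !mulmx0.
rewrite ?addr0 ?add0r.
have h1 : - (a^-1 *: c) *m a%:M + c = 0.
  by rewrite mul_mx_scalar scalerN scalerA mulfV // scale1r addNr.
have h2 : a%:M *m (- (a^-1 *: c))^T + c^T = 0.
  by rewrite mul_scalar_mx linearN /= linearZ /= scalerN scalerA mulfV // scale1r addNr.
by rewrite h1 h2 mul0mx add0r mulNmx -scalemxAl addrC.
Qed.

Lemma blk_conj m (B' X : 'M[R]_m) (a : R) :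
  block_mx 1 0 0 B' *m block_mx a%:M 0 0 X *m (block_mx (1 : 'M_1) 0 0 B')^T
  = block_mx a%:M 0 0 (B' *m X *m B'^T).
Proof.
rewrite tr_block_mx !mulmx_block !trmx0 !trmx1 !mul1mx !mulmx1 !mul0mx !mulmx0.
by rewrite ?addr0 ?add0r mul0mx.
Qed.

Lemma diag_exists m (Q : 'M[R]_m) : Q^T = Q ->
  exists B : 'M_m, B \in unitmx /\ exists c : 'rV_m, B *m Q *m B^T = diag_mx c.
Proof.
elim: m Q => [|m IH] Q hs.
  exists 1; split; first exact: unitmx1.
  by exists 0; apply/matrixP => [[]].
have [->|hQ] := eqVneq Q 0.
  exists 1; split; first exact: unitmx1.
  by exists 0; rewrite mulmx0 mul0mx linear0.
have [C [uC hC]] := pivot hs hQ.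
set Q1 := C *m Q *m C^T.
have hs1 : Q1^T = Q1 by rewrite /Q1 !trmx_mul trmxK hs mulmxA.
have [L [uL [Q' [hs' hL]]]] := @step m Q1 hs1 hC.
have [B' [uB' [c' hB']]] := IH Q' hs'.
exists (block_mx 1 0 0 B' *m L *m C); split.
  have hd : \det (block_mx (1 : 'M_1) 0 0 B') = \det B' by rewrite det_ublock det1 mul1r.
  by rewrite !unitmx_mul uL uC !andbT unitmxE hd -unitmxE.
exists (row_mx (const_mx (Q1 0 0) : 'rV_1) c' : 'rV_(m.+1)).
have hd2 : diag_mx (row_mx (const_mx (Q1 0 0) : 'rV_1) c') = block_mx (Q1 0 0)%:M 0 0 (diag_mx c').
  by rewrite diag_mx_row diag_const_mx.
rewrite hd2 -hB'.
rewrite !trmx_mul !mulmxA -(mulmxA _ C) -(mulmxA _ (C *m Q)) -/Q1.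
rewrite -(mulmxA _ L) -(mulmxA _ (L *m Q1)) hL.
by rewrite blk_conj.
Qed.

Definition isdiag m (Q : 'M[R]_m) (P : 'M[R]_m) (d : 'rV[R]_m) :=
  P \in unitmx /\ (forall i, d 0 i \in [:: -1; 0; 1]) /\ P^T *m Q *m P = diag_mx d.

Lemma sg_in (x : R) : Num.sg x \in [:: -1; 0; 1].
Proof.
rewrite !inE; case: (ltrgtP x 0) => h.
- by rewrite ltr0_sg // eqxx.
- by rewrite gtr0_sg // eqxx !orbT.
- by rewrite h sgr0 eqxx orbT.
Qed.

Lemma sign_exists m (Q : 'M[R]_m) : Q^T = Q -> exists P d, isdiag Q P d.
Proof.
move=> hs; have [B [uB [c hB]]] := diag_exists hs.
pose s := \row_i (if c 0 i == 0 then 1 else (Num.sqrt `|c 0 i|)^-1).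
have s0 i : s 0 i != 0.
  rewrite mxE; case: (c 0 i =P 0) => h; first exact: oner_neq0.
  by rewrite invr_eq0 sqrtr_eq0 -ltNge normr_gt0; apply/eqP.
exists (B^T *m diag_mx s), (\row_i Num.sg (c 0 i)); split; [|split].
- rewrite unitmx_mul unitmx_tr uB unitmxE det_diag unitfE /=.
  by apply/prodf_neq0 => i _; exact: s0.
- by move=> i; rewrite mxE sg_in.
rewrite !trmx_mul trmxK tr_diag_mx !mulmxA -(mulmxA _ B) -(mulmxA _ (B *m Q)) hB.
rewrite !mulmx_diag; congr diag_mx; apply/rowP => i; rewrite !mxE.
have [h|h] := eqVneq (c 0 i) 0; first by rewrite h mulr0 mul0r sgr0.
rewrite /=.
have ha : `|c 0 i| != 0 by rewrite normr_eq0.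
move: (sqr_sqrtr (normr_ge0 (c 0 i))) (numEsg (c 0 i)) ha.
set t := Num.sqrt _; set a := `|c 0 i|; set g := Num.sg _; set x := c 0 i.
move=> ht hx ha; rewrite hx -ht.
have tn0 : t != 0 by apply: contra ha; rewrite -ht => /eqP ->; rewrite expr0n.
by field.
Qed.

Definition qf m (Q : 'M[R]_m) (x : 'rV[R]_m) := (x *m Q *m x^T) 0 0.

Lemma qf_congr m (Q P : 'M[R]_m) w : qf Q (w *m P^T) = qf (P^T *m Q *m P) w.
Proof. by rewrite /qf trmx_mul trmxK !mulmxA. Qed.

Lemma qf_diag m (d w : 'rV[R]_m) : qf (diag_mx d) w = \sum_i d 0 i * w 0 i ^+ 2.
Proof.
rewrite /qf mul_mx_diag !mxE; apply: eq_bigr => i _; rewrite !mxE.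
by rewrite expr2 mulrA [_ * d 0 i]mulrC.
Qed.

Lemma inertia_le k l m (Q : 'M[R]_m) (S : 'M[R]_(k, m)) (T : 'M[R]_(l, m)) :
  (forall x, (x <= S)%MS -> x != 0 -> 0 < qf Q x) ->
  (forall x, (x <= T)%MS -> qf Q x <= 0) ->
  (\rank S + \rank T <= m)%N.
Proof.
move=> hS hT; rewrite -mxrank_sum_cap.
have [h|h] := eqVneq (S :&: T)%MS 0.
  by rewrite h mxrank0 addn0 rank_leq_col.
set x := nz_row (S :&: T)%MS.
have xS : (x <= S)%MS := submx_trans (nz_row_sub _) (capmxSl _ _).
have xT : (x <= T)%MS := submx_trans (nz_row_sub _) (capmxSr _ _).
have xn : x != 0 by rewrite nz_row_eq0.
have := hS x xS xn; have := hT x xT => h1 h2.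
by have := lt_le_trans h2 h1; rewrite ltxx.
Qed.

Lemma rank_diag_row m (a : 'rV[R]_1) (e : 'rV[R]_m) :
  \rank (diag_mx (row_mx a e)) = addn (a 0 0 != 0) (\rank (diag_mx e)).
Proof.
rewrite diag_mx_row rank_diag_block_mx; congr (_ + _)%N.
have -> : diag_mx a = (a : 'M_1) by apply/matrixP => i j; rewrite !ord1 !mxE eqxx mulr1n.
rewrite rank_rV; congr (nat_of_bool (~~ _)); apply/eqP/eqP => [->|h]; first by rewrite mxE.
by apply/matrixP => i j; rewrite !ord1 h mxE.
Qed.

Lemma rank_diag m (e : 'rV[R]_m) :
  \rank (diag_mx e) = count (fun i => e 0 i != 0) (enum 'I_m).
Proof.
elim: m e => [|m IH] e.
  have -> : enum 'I_0 = [::] by apply/size0nil; rewrite size_enum_ord.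
  by rewrite flatmx0 mxrank0.
have he : e = row_mx (lsubmx (e : 'rV_(1 + m))) (rsubmx (e : 'rV_(1 + m))) by rewrite hsubmxK.
rewrite {1}he rank_diag_row IH enum_ordSl /= count_map.
congr (_ + _)%N.
  by rewrite mxE; congr (_ != 0); congr (e _ _); apply: val_inj.
apply: eq_count => i /=; rewrite mxE; congr (_ != 0); congr (e _ _); exact: val_inj.
Qed.

Definition sel m (d : 'rV[R]_m) (pr : pred R) : 'rV[R]_m := \row_i (pr (d 0 i))%:R.
Definition U m (P : 'M[R]_m) (d : 'rV[R]_m) (pr : pred R) := diag_mx (sel d pr) *m P^T.
Definition cnt m (d : 'rV[R]_m) (pr : pred R) := count (fun i => pr (d 0 i)) (enum 'I_m).

Lemma U_rank m (P : 'M[R]_m) d pr : P \in unitmx -> \rank (U P d pr) = cnt d pr.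
Proof.
move=> uP; rewrite /U mxrankMfree ?row_free_unit ?unitmx_tr // rank_diag.
by apply: eq_count => i; rewrite mxE; case: (pr _); rewrite ?oner_neq0 ?eqxx.
Qed.

Lemma U_sub m (P : 'M[R]_m) d pr (x : 'rV[R]_m) : (x <= U P d pr)%MS ->
  exists w, x = w *m P^T /\ forall i, ~~ pr (d 0 i) -> w 0 i = 0.
Proof.
case/submxP => u ->; exists (u *m diag_mx (sel d pr)); split; first by rewrite mulmxA.
by move=> i hi; rewrite mul_mx_diag !mxE (negbTE hi) mulr0.
Qed.

Lemma U_pos m (Q P : 'M[R]_m) d (pr : pred R) : isdiag Q P d ->
  (forall i, pr (d 0 i) -> 0 < d 0 i) ->
  forall x : 'rV[R]_m, (x <= U P d pr)%MS -> x != 0 -> 0 < qf Q x.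
Proof.
move=> [uP [_ hd]] hpr x /U_sub [w [-> hw]] xn.
rewrite qf_congr hd qf_diag.
have ge0 i : 0 <= d 0 i * w 0 i ^+ 2.
  case: (boolP (pr (d 0 i))) => h; last by rewrite hw // expr0n mulr0.
  by rewrite mulr_ge0 ?sqr_ge0 ?ltW ?hpr.
rewrite lt_def sumr_ge0 ?andbT //; apply/negP => /eqP h0.
case/eqP: xn; suff -> : w = 0 by rewrite mul0mx.
apply/matrixP => a b; rewrite ord1 mxE.
have := psumr_eq0P (fun i _ => ge0 i) h0 (i := b) isT.
case: (boolP (pr (d 0 b))) => h; last by rewrite hw.
move/eqP; rewrite mulf_eq0 (gt_eqF (hpr _ h)) /= expf_eq0 /= => /eqP; done.
Qed.

Lemma U_nonpos m (Q P : 'M[R]_m) d (pr : pred R) : isdiag Q P d ->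
  (forall i, pr (d 0 i) -> d 0 i <= 0) ->
  forall x : 'rV[R]_m, (x <= U P d pr)%MS -> qf Q x <= 0.
Proof.
move=> [uP [_ hd]] hpr x /U_sub [w [-> hw]].
rewrite qf_congr hd qf_diag; apply: sumr_le0 => i _.
case: (boolP (pr (d 0 i))) => h; last by rewrite hw // expr0n mulr0.
by rewrite mulr_le0_ge0 ?sqr_ge0 ?hpr.
Qed.

Lemma m1n0 : ((-1 : R) == 0) = false. Proof. by rewrite oppr_eq0 oner_eq0. Qed.
Lemma m1n1 : ((-1 : R) == 1) = false. Proof. by apply/negbTE/eqP => h; lra. Qed.
Lemma p1nm1 : ((1 : R) == -1) = false. Proof. by apply/negbTE/eqP => h; lra. Qed.
Lemma p0n1 : ((0 : R) == 1) = false. Proof. by rewrite eq_sym oner_eq0. Qed.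
Lemma p0nm1 : ((0 : R) == -1) = false. Proof. by rewrite eq_sym m1n0. Qed.
Lemma p1n0 : ((1 : R) == 0) = false. Proof. by rewrite oner_eq0. Qed.
Definition neqs := (m1n0, m1n1, p1nm1, p0n1, p0nm1, p1n0, eqxx).

Lemma cdec (s : seq R) : all (fun x => x \in [:: -1; 0; 1]) s -> forall a : pred R,
  count a s = addn (addn (muln (a (-1)) (count_mem (-1) s)) (muln (a 0) (count_mem 0 s)))
     (muln (a 1) (count_mem 1 s)).
Proof.
move=> hs a; elim: s hs => [|x s IH] /=; first by rewrite !muln0.
move=> /andP [hx hs]; rewrite IH //.
move: hx; rewrite !inE => /or3P [] /eqP ->; rewrite !neqs /=;
  case: (a (-1)); case: (a 0); case: (a 1) => /=; lia.
Qed.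

Lemma perm3 (s1 s2 : seq R) : all (fun x => x \in [:: -1; 0; 1]) s1 ->
  all (fun x => x \in [:: -1; 0; 1]) s2 ->
  count_mem (-1) s1 = count_mem (-1) s2 -> count_mem 0 s1 = count_mem 0 s2 ->
  count_mem 1 s1 = count_mem 1 s2 -> perm_eq s1 s2.
Proof.
move=> h1 h2 e1 e2 e3; apply/seq.permP => a.
by rewrite (cdec h1) (cdec h2) e1 e2 e3.
Qed.

Lemma isdiag_opp m (Q P : 'M[R]_m) d : isdiag Q P d -> isdiag (-Q) P (-d).
Proof.
move=> [uP [hd hP]]; split; first by []; split.
  move=> i; rewrite mxE; move: (hd i); rewrite !inE => /or3P [] /eqP ->;
  by rewrite ?opprK ?oppr0 eqxx ?orbT.
by rewrite mulmxN mulNmx hP linearN.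
Qed.

Lemma cnt_total m (d : 'rV[R]_m) : (forall i, d 0 i \in [:: -1; 0; 1]) ->
  addn (addn (cnt d (pred1 (-1))) (cnt d (pred1 0))) (cnt d (pred1 1)) = m.
Proof.
move=> hd; rewrite /cnt -[in RHS](size_enum_ord m).
elim: (enum 'I_m) => //= i s IH.
move: (hd i); rewrite !inE => /or3P [] /eqP ->; rewrite !neqs /=; lia.
Qed.

Lemma cnt_predC m (d : 'rV[R]_m) (pr : pred R) :
  cnt d (predC pr) = (m - cnt d pr)%N.
Proof.
have h := count_predC (fun i => pr (d 0 i)) (enum 'I_m); rewrite size_enum_ord in h.
have h2 : cnt d (predC pr) = count (predC (fun i => pr (d 0 i))) (enum 'I_m) by apply: eq_count.
rewrite h2 /cnt; lia.
Qed.

Lemma cnt_le m (d : 'rV[R]_m) (pr : pred R) : (cnt d pr <= m)%N.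
Proof. by rewrite /cnt -[X in (_ <= X)%N](size_enum_ord m) count_size. Qed.

Lemma pos_le m (Q P P' : 'M[R]_m) d d' : isdiag Q P d -> isdiag Q P' d' ->
  leq (cnt d (pred1 1)) (cnt d' (pred1 1)).
Proof.
move=> hd hd'.
have hpos : forall i, pred1 1 (d 0 i) -> 0 < d 0 i by move=> i /= /eqP ->; exact: ltr01.
have hnp : forall i, predC (pred1 1) (d' 0 i) -> d' 0 i <= 0.
  move=> i /=; case: hd' => _ [hin _]; move: (hin i); rewrite !inE => /or3P [] /eqP ->;
  by rewrite ?eqxx // ?lerN10 ?lexx.
have := inertia_le (U_pos hd hpos) (U_nonpos hd' hnp).
rewrite !U_rank; [|by case: hd'|by case: hd].
rewrite cnt_predC; have := cnt_le d' (pred1 1); lia.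
Qed.

Lemma cnt_opp m (d : 'rV[R]_m) c : cnt (- d) (pred1 c) = cnt d (pred1 (- c)).
Proof. by apply: eq_count => i /=; rewrite mxE eqr_oppLR. Qed.

Lemma sylvester m (Q P P' : 'M[R]_m) d d' : isdiag Q P d -> isdiag Q P' d' ->
  forall c, cnt d (pred1 c) = cnt d' (pred1 c).
Proof.
move=> hd hd'.
have e1 : cnt d (pred1 1) = cnt d' (pred1 1).
  by apply/eqP; rewrite eqn_leq (pos_le hd hd') (pos_le hd' hd).
have em : cnt d (pred1 (-1)) = cnt d' (pred1 (-1)).
  have h1 := pos_le (isdiag_opp hd) (isdiag_opp hd').
  have h2 := pos_le (isdiag_opp hd') (isdiag_opp hd).
  by move: h1 h2; rewrite !cnt_opp => h1 h2; apply/eqP; rewrite eqn_leq h1 h2.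
have t1 := cnt_total (proj1 (proj2 hd)); have t2 := cnt_total (proj1 (proj2 hd')).
move=> c.
have [->|h1] := eqVneq c 1; first exact: e1.
have [->|h2] := eqVneq c (-1); first exact: em.
have [->|h0] := eqVneq c 0; first (move: t1 t2 e1 em; set a := cnt d _; set b := cnt d _; set c1 := cnt d _; set a2 := cnt d' _; set b2 := cnt d' _; set c2 := cnt d' _; lia).
have z (e : 'rV[R]_m) : (forall i, e 0 i \in [:: -1; 0; 1]) -> cnt e (pred1 c) = 0%N.
  move=> he; apply/eqP; rewrite /cnt -leqn0 leqNgt -has_count; apply/hasPn => i _ /=.
  by apply/eqP => hc; move: (he i); rewrite hc !inE (negbTE h1) (negbTE h2) (negbTE h0).
by rewrite !z //; [case: hd' => _ []| case: hd => _ []].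
Qed.

Lemma Z1 m (Q P : 'M[R]_m) d : isdiag Q P d -> nondeg_form Q -> forall i, d 0 i != 0.
Proof.
move=> [uP [_ hd]] hnd i; apply/negP => /eqP h0.
set v := row i P^T.
have h1 : v *m Q *m P = 0.
  rewrite /v -!row_mul hd; apply/rowP => j; rewrite !mxE h0 mul0rn; done.
have h2 : v *m Q = 0.
  by rewrite -[v *m Q]mulmx1 -(mulmxV uP) mulmxA h1 mul0mx.
have h3 := hnd v h2.
have : (delta_mx 0 i : 'rV[R]_m) = 0.
  have uPT : P^T \in unitmx by rewrite unitmx_tr.
  by rewrite -[LHS](mulmxK uPT) -rowE -/v h3 mul0mx.
move/matrixP => /(_ 0 i); rewrite !mxE !eqxx /= => /eqP; by rewrite oner_eq0.
Qed.

Lemma Z2 m (Q P : 'M[R]_m) d : isdiag Q P d -> radical_nontrivial Q ->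
  exists i, d 0 i = 0.
Proof.
move=> [uP [_ hd]] [X [Xn0 hX]].
have uPT : P^T \in unitmx by rewrite unitmx_tr.
set w := X *m invmx P^T.
have hw : X = w *m P^T by rewrite /w mulmxKV.
have h : w *m diag_mx d = 0 by rewrite -hd !mulmxA -hw hX !mul0mx.
case: (boolP [exists i, d 0 i == 0]) => [/existsP [i /eqP hi]|/existsPn hn].
  by exists i.
case/eqP: Xn0; rewrite hw; suff -> : w = 0 by rewrite mul0mx.
apply/matrixP => a b; rewrite ord1 [RHS]mxE.
move/matrixP: h => /(_ 0 b); rewrite mul_mx_diag !mxE => /eqP.
by rewrite mulf_eq0 (negbTE (hn b)) orbF => /eqP.
Qed.

Lemma qf_block n (G : 'M[R]_n) (X : 'M[R]_(n, 1)) (Y : 'M[R]_(1, n)) (z : 'M[R]_1) y :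
  qf (block_mx G X Y z) (row_mx y 0) = qf G y.
Proof.
rewrite /qf tr_row_mx mul_row_block !mul0mx !addr0 mul_row_col trmx0 mulmx0 addr0.
done.
Qed.

Lemma amb_bound n (G : 'M[R]_n) (X : 'M[R]_(n, 1)) (Y : 'M[R]_(1, n)) (z : 'M[R]_1)
  P d Pg dg : isdiag (block_mx G X Y z) P d -> isdiag G Pg dg ->
  leq (addn (cnt d (pred1 1)) (n - cnt dg (pred1 1))) (n + 1).
Proof.
move=> hd hg.
have hpos : forall i, pred1 1 (d 0 i) -> 0 < d 0 i by move=> i /= /eqP ->; exact: ltr01.
have hnp : forall i, predC (pred1 1) (dg 0 i) -> dg 0 i <= 0.
  move=> i /=; case: hg => _ [hin _]; move: (hin i); rewrite !inE => /or3P [] /eqP ->;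
  by rewrite ?eqxx // ?lerN10 ?lexx.
set T := row_mx (U Pg dg (predC (pred1 1))) (0 : 'M_(n, 1)).
have hT : forall x : 'rV_(n + 1), (x <= T)%MS -> qf (block_mx G X Y z) x <= 0.
  move=> x /submxP [D ->]; rewrite mul_mx_row mulmx0 qf_block.
  exact: (U_nonpos hg hnp (submxMl _ _)).
have := inertia_le (U_pos hd hpos) hT.
rewrite /T rank_row_mx0 !U_rank; [|by case: hg|by case: hd].
by rewrite cnt_predC.
Qed.

Lemma main_counts n (g : 'M[R]_n) (l : 'rV[R]_n) (l2 : R) PA dA Pg dg :
  nondeg_form (ambientA g l l2) -> radical_nontrivial g ->
  isdiag (ambientA g l l2) PA dA -> isdiag g Pg dg ->
  [/\ cnt dA (pred1 0) = 0%N, cnt dg (pred1 0) = 1%N,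
      cnt dA (pred1 1) = (cnt dg (pred1 1)).+1 &
      cnt dA (pred1 (-1)) = (cnt dg (pred1 (-1))).+1].
Proof.
move=> hnd hrad hA hg.
have z0 : cnt dA (pred1 0) = 0%N.
  apply/eqP; rewrite /cnt -leqn0 leqNgt -has_count; apply/hasPn => i _ /=.
  exact: Z1 hA hnd i.
have g0 : leq 1 (cnt dg (pred1 0)).
  have [i hi] := Z2 hg hrad; rewrite /cnt -has_count; apply/hasP; exists i.
    exact: mem_enum.
  by rewrite /= hi.
have tA := cnt_total (proj1 (proj2 hA)); have tg := cnt_total (proj1 (proj2 hg)).
have bp := amb_bound hA hg.
have hA2 : isdiag (block_mx (- g) (- l^T) (- l) (- l2%:M)) PA (- dA).
  by rewrite -opp_block_mx; exact: isdiag_opp.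
have bn := amb_bound hA2 (isdiag_opp hg).
rewrite !cnt_opp in bn.
move: z0 g0 tA tg bp bn.
set a1 := cnt dA (pred1 1); set a0 := cnt dA (pred1 0); set am := cnt dA (pred1 (-1)).
set g1 := cnt dg (pred1 1); set g0 := cnt dg (pred1 0); set gm := cnt dg (pred1 (-1)).
move=> *; split; lia.
Qed.

Definition sq m (d : 'rV[R]_m) := [seq d 0 i | i <- enum 'I_m].

Lemma count_sq m (d : 'rV[R]_m) c : count_mem c (sq d) = cnt d (pred1 c).
Proof. by rewrite /sq count_map. Qed.

Lemma all_sq m (d : 'rV[R]_m) : (forall i, d 0 i \in [:: -1; 0; 1]) ->
  all (fun x => x \in [:: -1; 0; 1]) (sq d).
Proof. by move=> h; apply/allP => x /mapP [i _ ->]. Qed.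

Lemma is_sign_perm m (Q P : 'M[R]_m) d s : isdiag Q P d -> perm_eq (sq d) s -> is_sign Q s.
Proof.
move=> [uP [hin hP]] hperm.
have ht : sq d = [tuple d 0 i | i < m] :> seq R by [].
rewrite perm_sym ht in hperm.
case/tuple_permP: hperm => p hs.
exists (col_perm p P); split.
  by rewrite col_permE unitmx_mul uP unitmx_perm.
exists (\row_i d 0 (p i)); split; first by move=> i; rewrite mxE.
split.
  have -> : (col_perm p P)^T *m Q *m col_perm p P = row_perm p (col_perm p (P^T *m Q *m P)).
    by rewrite tr_col_perm !row_permE !col_permE !mulmxA.
  rewrite hP; apply/matrixP => i j; rewrite !mxE (inj_eq (@perm_inj _ p)).
  done.
rewrite hs.
have e : [seq (\row_i0 d 0 (p i0)) 0 i | i <- enum 'I_m] =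
    [tuple tnth [tuple d 0 i0 | i0 < m] (p i) | i < m] :> seq R.
  by apply: eq_map => i; rewrite tnth_mktuple mxE.
by rewrite e perm_refl.
Qed.

Lemma target_all m (d : 'rV[R]_m) sg : (forall i, d 0 i \in [:: -1; 0; 1]) ->
  perm_eq (sq d) sg -> all (fun x => x \in [:: -1; 0; 1]) ([:: -1; 1] ++ rem 0 sg).
Proof.
move=> hin hpg; rewrite all_cat /= !inE !eqxx ?orbT /=.
apply/allP => x /mem_rem; rewrite -(perm_mem hpg) => /mapP [i _ ->]; exact: hin.
Qed.

Lemma target_count m (d : 'rV[R]_m) sg (c : R) : perm_eq (sq d) sg -> leq 1 (cnt d (pred1 0)) ->
  addn (0 == c) (count_mem c ([:: -1; 1] ++ rem 0 sg)) =
  addn (addn (-1 == c) (1 == c)) (cnt d (pred1 c)).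
Proof.
move=> hpg g0.
have hsg c' : count_mem c' sg = cnt d (pred1 c') by rewrite -(seq.permP hpg) count_sq.
have h0 : 0 \in sg by rewrite -has_pred1 has_count hsg.
have := seq.permP (perm_to_rem h0) (pred1 c); rewrite hsg /= => ->.
set a := (0 == c); set b := (-1 == c); set e := (1 == c); set z := count _ _; lia.
Qed.

End S.

Unset Implicit Arguments.
Set Strict Implicit.

Theorem lemma2p3 (R : realType) (n : nat) (gamma : 'M[R]_n) (ell : 'rV[R]_n)
    (ell2 : R) :
  gamma^T = gamma ->
  nondeg_form (ambientA gamma ell ell2) ->
  radical_nontrivial gamma ->
  (forall sg : seq R, is_sign gamma sg ->
     forall sA : seq R,
       is_sign (ambientA gamma ell ell2) sA <->
       perm_eq sA ([:: -1; 1] ++ rem 0 sg)) /\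
  (is_sign (ambientA gamma ell ell2) (-1 :: nseq n 1) <-> psd_form gamma).
Proof.
move=> hs hnd hrad.
have hsA : (ambientA gamma ell ell2)^T = ambientA gamma ell ell2.
  by rewrite /ambientA tr_block_mx hs trmxK tr_scalar_mx.
have key : forall sg Pg dg, isdiag gamma Pg dg -> perm_eq (sq dg) sg ->
    forall PA dA, isdiag (ambientA gamma ell ell2) PA dA ->
    perm_eq (sq dA) ([:: -1; 1] ++ rem 0 sg).
  move=> sg Pg dg hg hpg PA dA hA.
  have [z0 g0 e1 em] := main_counts hnd hrad hA hg.
  have g0' : leq 1 (cnt dg (pred1 0)) by rewrite g0.
  apply: perm3.
  - exact: all_sq (proj1 (proj2 hA)).
  - exact: target_all (proj1 (proj2 hg)) hpg.
  - have := target_count (-1) hpg g0'; rewrite !count_sq /= ?eqxx ?m1n0 ?m1n1 ?p1nm1 ?p0n1 ?p0nm1 ?p1n0 /=.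
    move: em; set x := cnt dA _; set y := cnt dg _; set z := count _ _; lia.
  - have := target_count 0 hpg g0'; rewrite !count_sq /= ?eqxx ?m1n0 ?m1n1 ?p1nm1 ?p0n1 ?p0nm1 ?p1n0 /=.
    move: z0 g0; set x := cnt dA _; set y := cnt dg _; set z := count _ _; lia.
  - have := target_count 1 hpg g0'; rewrite !count_sq /= ?eqxx ?m1n0 ?m1n1 ?p1nm1 ?p0n1 ?p0nm1 ?p1n0 /=.
    move: e1; set x := cnt dA _; set y := cnt dg _; set z := count _ _; lia.
have part1 : forall sg : seq R, is_sign gamma sg ->
     forall sA : seq R,
       is_sign (ambientA gamma ell ell2) sA <->
       perm_eq sA ([:: -1; 1] ++ rem 0 sg).
  move=> sg [Pg [uPg [dg [hin [hP hpg]]]]] sA.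
  have hg : isdiag gamma Pg dg by [].
  split.
    move=> [PA [uPA [dA [hinA [hPA hpA]]]]].
    have hA : isdiag (ambientA gamma ell ell2) PA dA by [].
    have k := key _ _ _ hg hpg PA dA hA; rewrite perm_sym in hpA.
    exact: perm_trans hpA k.
  move=> h; have [PA [dA hA]] := sign_exists hsA.
  apply: (is_sign_perm hA); rewrite perm_sym in h.
  exact: perm_trans (key _ _ _ hg hpg _ _ hA) h.
split; first exact: part1.
have [Pg [dg hg]] := sign_exists hs.
have [PA [dA hA]] := sign_exists hsA.
have [z0 g0 e1 em] := main_counts hnd hrad hA hg.
have g0' : leq 1 (cnt dg (pred1 0)) by rewrite g0.
have tg := cnt_total (proj1 (proj2 hg)).
have P1 := part1 (sq dg) (is_sign_perm hg (perm_refl _)).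
have hin := proj1 (proj2 hg); have hPg := proj2 (proj2 hg); have uPg := proj1 hg.
have cnt0 : cnt dg (pred1 (-1)) = 0%N <-> psd_form gamma.
  split.
    move=> hc v.
    have hno : forall i, dg 0 i != -1.
      move=> i; apply/negP => /eqP hi.
      have : leq 1 (cnt dg (pred1 (-1))).
        rewrite /cnt -has_count; apply/hasP; exists i; first exact: mem_enum.
        by rewrite /= hi.
      by rewrite hc.
    have uPT : Pg^T \in unitmx by rewrite unitmx_tr.
    have hv : v = (v *m invmx Pg^T) *m Pg^T by rewrite mulmxKV.
    rewrite -/(qf gamma v) hv qf_congr hPg qf_diag; apply: sumr_ge0 => i _.
    apply: mulr_ge0; last exact: sqr_ge0.
    move: (hin i) (hno i); rewrite !inE => /or3P [] /eqP ->; rewrite ?eqxx //.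
  move=> hpsd; apply/eqP; rewrite /cnt -leqn0 leqNgt -has_count; apply/hasPn => i _ /=.
  apply/negP => /eqP hi.
  have := hpsd ((delta_mx 0 i : 'rV_n) *m Pg^T).
  rewrite -/(qf gamma _) qf_congr hPg /qf bf_delta mxE eqxx mulr1n hi.
  by rewrite ler0N1.
rewrite -cnt0 P1.
have am : all (fun x => x \in [:: -1; 0; 1]) ((-1 :: nseq n 1) : seq R).
  by rewrite /= all_nseq !inE !eqxx /= !orbT.
have at1 := target_all hin (perm_refl (sq dg)).
have tc c := target_count c (perm_refl (sq dg)) g0'.
split.
  move=> hp; have := seq.permP hp (pred1 (-1)).
  have := tc (-1).
  rewrite /= ?count_nseq /= ?eqxx ?m1n0 ?m1n1 ?p1nm1 ?p0n1 ?p0nm1 ?p1n0 /=.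
  set x := cnt dg _; set z := count _ _; lia.
move=> hc; apply: perm3 => //.
- have := tc (-1); rewrite /= ?count_nseq /= ?eqxx ?m1n0 ?m1n1 ?p1nm1 ?p0n1 ?p0nm1 ?p1n0 /=.
  move: hc; set x := cnt dg _; set z := count _ _; lia.
- have := tc 0; rewrite /= ?count_nseq /= ?eqxx ?m1n0 ?m1n1 ?p1nm1 ?p0n1 ?p0nm1 ?p1n0 /=.
  move: g0; set x := cnt dg _; set z := count _ _; lia.
- have := tc 1; rewrite /= ?count_nseq /= ?eqxx ?m1n0 ?m1n1 ?p1nm1 ?p0n1 ?p0nm1 ?p1n0 /=.
  move: tg g0 hc; set x := cnt dg (pred1 1); set y := cnt dg (pred1 0); set w := cnt dg (pred1 (-1));
  set z := count _ _; lia.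
Qed.
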